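(* Let $3\le p\le q<\omega$, $0\le n<\omega$, and $0\le i,j\le p$ with $i\ne j$. Then $\mathfrak L^{ij}(p,n)$ is isomorphic to a subalgebra of $\mathfrak L(q,n)$.
   Context: For $3\le p<\omega$, $0\le n<\omega$, $\mathfrak L(p,n)$ is the finite symmetric (i.e. $\breve x=x$ for all $x$) integral (i.e. $1'$ is an atom) relation algebra with atoms $1',a_0,\dots,a_p,t_1,\dots,t_n$ whose composition of atoms is given, for $0\le i,j\le p$, $i\ne j$, $1\le k,l\le n$, $k\ne l$, by: $a_i;a_i=1'+a_i$; $a_i;a_j=0'\cdot\overline{a_i+a_j}$ (where $0'=\overline{1'}$); $a_i;t_k=t_1+\cdots+t_n$; $t_k;t_k=1'+a_0+\cdots+a_p$; $t_k;t_l=a_0+\cdots+a_p$ (and composition with $1'$ is the identity). For $0\le i,j\le p$, $i\ne j$, $\mathfrak L^{ij}(p,n)$ is the subalgebra of $\mathfrak L(p,n)$ whose atoms are $1'$, $a_i+a_j$, the $a_k$ for $0\le k\le p$ with $k\ne i,j$, and $t_1,\dots,t_n$. *)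

(* Defs.v *)
From HB Require Import structures.
From mathcomp Require Import all_boot.
Set Implicit Arguments. Unset Strict Implicit. Unset Printing Implicit Defensive.

(* Atoms of L(p,n):  None = 1' ,  Some (inl i) = a_i (0 <= i <= p),
   Some (inr k) = t_{k+1} (0 <= k < n). *)
Definition atom (p n : nat) : finType := option ('I_p.+1 + 'I_n)%type.

Definition idA {p n : nat} : atom p n := None.
Definition aA {p n : nat} (i : 'I_p.+1) : atom p n := Some (inl i).
Definition tA {p n : nat} (k : 'I_n) : atom p n := Some (inr k).

Definition allA (p n : nat) : {set atom p n} := [set aA i | i : 'I_p.+1].
Definition allT (p n : nat) : {set atom p n} := [set tA k | k : 'I_n].

(* composition of atoms (symmetric: t_k;a_i = (a_i;t_k)^~ = a_i;t_k) *)
Definition comp_atom (p n : nat) (x y : atom p n) : {set atom p n} :=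
  match x, y with
  | None, _ => [set y]
  | _, None => [set x]
  | Some (inl i), Some (inl j) =>
      if i == j then [set idA; aA i]
      else ~: [set idA; aA i; aA j]
  | Some (inl _), Some (inr _) => allT p n
  | Some (inr _), Some (inl _) => allT p n
  | Some (inr k), Some (inr l) =>
      if k == l then idA |: allA p n else allA p n
  end.

Definition Lcomp (p n : nat) (X Y : {set atom p n}) : {set atom p n} :=
  \bigcup_(x in X) \bigcup_(y in Y) comp_atom x y.
Definition Lconv (p n : nat) (X : {set atom p n}) : {set atom p n} := X.
Definition Lid (p n : nat) : {set atom p n} := [set idA].

Definition is_subalgebra (p n : nat) (S : pred {set atom p n}) : Prop :=
  [/\ S (Lid p n),
      (forall X Y, S X -> S Y -> S (X :|: Y)),
      (forall X, S X -> S (~: X)),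
      (forall X Y, S X -> S Y -> S (Lcomp X Y)) &
      (forall X, S X -> S (Lconv X))].

(* Atoms of L^{ij}(p,n): 1', a_i + a_j, a_k (k <> i,j), t_1..t_n. *)
Definition Lij_atoms (p n : nat) (i j : 'I_p.+1) : {set {set atom p n}} :=
  [set [set aA i; aA j]] :|:
  [set [set x] | x in ~: [set aA i; aA j]].

Definition Lij (p n : nat) (i j : 'I_p.+1) : pred {set atom p n} :=
  fun X => [exists A : {set {set atom p n}},
              (A \subset @Lij_atoms p n i j) && (X == \bigcup_(B in A) B)].

Definition is_iso_between (p q n : nat)
    (S1 : pred {set atom p n}) (S2 : pred {set atom q n})
    (f : {set atom p n} -> {set atom q n}) : Prop :=
  (forall X, S1 X -> S2 (f X)) /\
  (forall X Y, S1 X -> S1 Y -> f X = f Y -> X = Y) /\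
  (forall Y, S2 Y -> exists2 X, S1 X & f X = Y) /\
  f (Lid p n) = Lid q n /\
  (forall X Y, S1 X -> S1 Y -> f (X :|: Y) = f X :|: f Y) /\
  (forall X, S1 X -> f (~: X) = ~: f X) /\
  (forall X Y, S1 X -> S1 Y -> f (Lcomp X Y) = Lcomp (f X) (f Y)) /\
  (forall X, S1 X -> f (Lconv X) = Lconv (f X)).

(* Main.v *)
Require Import Defs.
From mathcomp Require Import all_boot zify.
Set Implicit Arguments. Unset Strict Implicit.

Section Gen.
Variables r n : nat.
Implicit Types X Y : {set atom r n}.

Lemma eqAA (a b : 'I_r.+1) : (@aA r n a == aA b) = (a == b).
Proof. by []. Qed.
Lemma eqAT (a : 'I_r.+1) k : (@aA r n a == tA k) = false. Proof. by []. Qed.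
Lemma eqTA (a : 'I_r.+1) k : (@tA r n k == aA a) = false. Proof. by []. Qed.
Lemma eqTT k l : (@tA r n k == tA l) = (k == l). Proof. by []. Qed.
Lemma eqAI (a : 'I_r.+1) : (@aA r n a == idA) = false. Proof. by []. Qed.
Lemma eqIA (a : 'I_r.+1) : (@idA r n == aA a) = false. Proof. by []. Qed.
Lemma eqTI k : (@tA r n k == idA) = false. Proof. by []. Qed.
Lemma eqIT k : (@idA r n == tA k) = false. Proof. by []. Qed.

Lemma allT_A a : (@aA r n a \in Defs.allT r n) = false.
Proof. by apply/imsetP => -[k _]. Qed.
Lemma allT_T k : (@tA r n k \in Defs.allT r n).
Proof. by apply/imsetP; exists k. Qed.
Lemma allT_I : (@idA r n \in Defs.allT r n) = false.
Proof. by apply/imsetP => -[k _]. Qed.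
Lemma allA_A a : (@aA r n a \in Defs.allA r n).
Proof. by apply/imsetP; exists a. Qed.
Lemma allA_T k : (@tA r n k \in Defs.allA r n) = false.
Proof. by apply/imsetP => -[k' _]. Qed.
Lemma allA_I : (@idA r n \in Defs.allA r n) = false.
Proof. by apply/imsetP => -[k _]. Qed.

Lemma mem_Lcomp X Y z : (z \in Lcomp X Y) =
  [exists x in X, exists y in Y, z \in comp_atom x y].
Proof.
apply/bigcupP/existsP => [[x Hx /bigcupP [y Hy Hz]]|[x /andP[Hx /existsP[y /andP[Hy Hz]]]]].
  by exists x; rewrite Hx; apply/existsP; exists y; rewrite Hy.
by exists x => //; apply/bigcupP; exists y.
Qed.

Definition hasA X := [exists a, @aA r n a \in X].
Definition hasT X := [exists k, @tA r n k \in X].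
Definition Pd X Y := [exists a, exists b, [&& a != b, @aA r n a \in X & @aA r n b \in Y]].
Definition Qd c X Y := [exists a, exists b,
   [&& a != b, a != c, b != c, @aA r n a \in X & @aA r n b \in Y]].

Lemma hasAP X a : aA a \in X -> hasA X. Proof. by move=> H; apply/existsP; exists a. Qed.
Lemma hasTP X k : tA k \in X -> hasT X. Proof. by move=> H; apply/existsP; exists k. Qed.

Ltac simpz := rewrite ?inE ?eqAA ?eqAT ?eqTA ?eqTT ?eqAI ?eqIA ?eqTI ?eqIT
   ?allT_A ?allT_T ?allT_I ?allA_A ?allA_T ?allA_I /=.

Lemma mem_comp_I X Y : (idA \in Lcomp X Y) = [exists x, (x \in X) && (x \in Y)].
Proof.
rewrite mem_Lcomp; apply/idP/idP.
  case/existsP=> x /andP[Hx /existsP[y /andP[Hy Hz]]].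
  case: x Hx Hz => [[a|l]|] Hx; case: y Hy => [[b|m]|] Hy /= Hz; move: Hz; simpz => //.
  - case: (a =P b) => [Eab|_]; simpz => // _; move: Hy; rewrite -Eab => Hy; apply/existsP; exists (aA a); by rewrite Hx.
  - case: (l =P m) => [Eab|]; simpz => // _; move: Hy; rewrite -Eab => Hy; apply/existsP; exists (tA l); by rewrite Hx.
  - by move=> _; apply/existsP; exists idA; rewrite Hx.
case/existsP => x /andP[Hx Hy]; apply/existsP; exists x; rewrite Hx /=.
apply/existsP; exists x; rewrite Hy /=.
by case: x Hx Hy => [[a|l]|] /= _ _; simpz; rewrite ?eqxx; simpz.
Qed.

Ltac fin Hx Hy := (try rewrite (hasAP Hx)); (try rewrite (hasTP Hx));
  (try rewrite (hasAP Hy)); (try rewrite (hasTP Hy)); rewrite ?Hx ?Hy /= ?orbT ?andbT //.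

Lemma wit X Y z x y : x \in X -> y \in Y -> z \in comp_atom x y ->
  [exists x in X, exists y in Y, z \in comp_atom x y].
Proof. by move=> Hx Hy Hz; apply/existsP; exists x; rewrite Hx; apply/existsP; exists y; rewrite Hy. Qed.

Lemma mem_comp_t k X Y : (tA k \in Lcomp X Y) = [|| (idA \in X) && (tA k \in Y),
  (tA k \in X) && (idA \in Y), hasA X && hasT Y, hasT X && hasA Y | Pd X Y].
Proof.
rewrite mem_Lcomp; apply/idP/idP.
  case/existsP=> x /andP[Hx /existsP[y /andP[Hy Hz]]].
  case: x Hx Hz => [[a|l]|] Hx; case: y Hy => [[b|m]|] Hy /= Hz; move: Hz.
  - case: eqP => [E|NE]; simpz => // _.
    have ->: Pd X Y by apply/existsP; exists a; apply/existsP; exists b; apply/and3P; split => //; apply/eqP.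
    by rewrite !orbT.
  - by simpz => _; fin Hx Hy.
  - by simpz.
  - by simpz => _; fin Hx Hy.
  - by case: eqP => _; simpz.
  - by simpz => /eqP [->]; fin Hx Hy.
  - by simpz.
  - by simpz => /eqP [->]; fin Hx Hy.
  - by simpz.
case/orP => [/andP[H1 H2]|/orP[/andP[H1 H2]|/orP[/andP[/existsP[a Ha] /existsP[l Hl]]|/orP[/andP[/existsP[l Hl] /existsP[a Ha]]|/existsP[a /existsP[b /and3P[Nab Ha Hb]]]]]]].
- by apply: (wit H1 H2); simpz.
- by apply: (wit H1 H2); simpz.
- by apply: (wit Ha Hl); simpz.
- by apply: (wit Hl Ha); simpz.
- by apply: (wit Ha Hb); rewrite /= (negbTE Nab); simpz.
Qed.
Lemma mem_comp_a c X Y : (aA c \in Lcomp X Y) = [|| (idA \in X) && (aA c \in Y),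
  (aA c \in X) && (idA \in Y), (aA c \in X) && (aA c \in Y), Qd c X Y | hasT X && hasT Y].
Proof.
rewrite mem_Lcomp; apply/idP/idP.
  case/existsP=> x /andP[Hx /existsP[y /andP[Hy Hz]]].
  case: x Hx Hz => [[a|l]|] Hx; case: y Hy => [[b|m]|] Hy /= Hz; move: Hz.
  - case: eqP => [E|NE]; simpz.
      by move/eqP => Ec; rewrite Ec; move: Hy; rewrite -E => Hy; rewrite Hx Hy /= !orbT.
    rewrite negb_or => /andP[Nca Ncb].
    have ->: Qd c X Y.
      apply/existsP; exists a; apply/existsP; exists b; apply/and5P; split => //;
        [apply/eqP|rewrite eq_sym|rewrite eq_sym] => //.
    by rewrite !orbT.
  - by simpz.
  - by simpz => /eqP ->; rewrite Hx Hy /= orbT.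
  - by simpz.
  - by move=> _; fin Hx Hy.
  - by simpz.
  - by simpz => /eqP ->; rewrite Hx Hy.
  - by simpz.
  - by simpz.
case/orP => [/andP[H1 H2]|/orP[/andP[H1 H2]|/orP[/andP[H1 H2]|/orP[/existsP[a /existsP[b /and5P[Nab Nac Nbc Ha Hb]]]|/andP[/existsP[l Hl] /existsP[m Hm]]]]]].
- by apply: (wit H1 H2); simpz.
- by apply: (wit H1 H2); simpz.
- by apply: (wit H1 H2); rewrite /= eqxx; simpz.
- by apply: (wit Ha Hb); rewrite /= (negbTE Nab); simpz; rewrite !(eq_sym c) (negbTE Nac) (negbTE Nbc).
- apply: (wit Hl Hm); rewrite /=; case: eqP => _; simpz => //.
Qed.
Lemma Qd_swap (i j : 'I_r.+1) X Y : i != j ->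
  (aA i \in X) = (aA j \in X) -> (aA i \in Y) = (aA j \in Y) ->
  Qd i X Y -> Qd j X Y.
Proof.
move=> Nij RX RY /existsP[a /existsP[b /and5P[Nab Nai Nbi Ha Hb]]].
case: (a =P j) => [Ea|Naj].
  apply/existsP; exists i; apply/existsP; exists b; apply/and5P; split => //.
  - by rewrite eq_sym.
  - by rewrite -Ea eq_sym.
  - by rewrite RX -Ea.
case: (b =P j) => [Eb|Nbj].
  apply/existsP; exists a; apply/existsP; exists i; apply/and5P; split => //.
  - by apply/eqP.
  - by rewrite RY -Eb.
apply/existsP; exists a; apply/existsP; exists b; apply/and5P; split => //; by apply/eqP.
Qed.
Lemma mkQd c X Y (a b : 'I_r.+1) : val a != val b -> val a != val c -> val b != val c ->
  aA a \in X -> aA b \in Y -> Qd c X Y.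
Proof. by move=> *; apply/existsP; exists a; apply/existsP; exists b; apply/and5P. Qed.
Lemma mkPd X Y (a b : 'I_r.+1) : val a != val b -> aA a \in X -> aA b \in Y -> Pd X Y.
Proof. by move=> *; apply/existsP; exists a; apply/existsP; exists b; apply/and3P. Qed.
End Gen.

Section Spec.
Variables p q n : nat.
Variables i j : 'I_p.+1.
Hypothesis Hpq : p <= q.
Hypothesis Hij : i != j.

Definition resp (X : {set atom p n}) := (aA i \in X) == (aA j \in X).

Lemma atom_resp B : B \in Lij_atoms n i j -> (aA i \in B) = (aA j \in B).
Proof.
case/setUP.
  by move/set1P => ->; rewrite !inE !eqxx orbT.
case/imsetP => x; rewrite !inE negb_or => /andP[Hi Hj] ->; rewrite !inE.
by rewrite !(eq_sym _ x) (negbTE Hi) (negbTE Hj).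
Qed.

Lemma Lij_resp X : Lij i j X = resp X.
Proof.
apply/idP/idP.
  case/existsP => A /andP[sub /eqP ->]; apply/eqP.
  by apply/bigcupP/bigcupP => -[B HB H]; exists B => //;
    [rewrite -(atom_resp (subsetP sub _ HB))|rewrite (atom_resp (subsetP sub _ HB))].
move/eqP=> R; apply/existsP; exists [set B in Lij_atoms n i j | B \subset X].
apply/andP; split; first by apply/subsetP => B; rewrite inE => /andP[].
apply/eqP/setP => z; apply/idP/bigcupP; last first.
  by case=> B; rewrite inE => /andP[_ /subsetP]; apply.
move=> Hz; case: (boolP (z \in [set aA i; aA j])) => Hc.
  exists [set aA i; aA j]; last by [].
  rewrite !inE eqxx /=; apply/subsetP => w; rewrite !inE.
  move: Hc; rewrite !inE => /orP[] /eqP E; rewrite E in Hz;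
  by case/orP => /eqP ->; rewrite // ?R // -R.
exists [set z]; last by rewrite inE.
rewrite !inE; apply/andP; split; last by apply/subsetP => w; rewrite inE => /eqP ->.
by apply/orP; right; apply/imsetP; exists z; rewrite // inE.
Qed.

Definition wd (a : 'I_p.+1) : 'I_q.+1 := widen_ord (Hpq : p.+1 <= q.+1) a.
Definition inC (m : 'I_q.+1) := [|| val m == val i, val m == val j | p < m].
Definition hc (m : 'I_q.+1) : 'I_p.+1 := if inC m then i else inord m.
Definition h (z : atom q n) : atom p n :=
  match z with Some (inl m) => aA (hc m) | Some (inr k) => tA k | None => idA end.
Definition e (x : atom p n) : atom q n :=
  match x with Some (inl a) => aA (wd a) | Some (inr k) => tA k | None => idA end.
Definition f (X : {set atom p n}) : {set atom q n} := [set z | h z \in X].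

Lemma mem_f X z : (z \in f X) = (h z \in X). Proof. by rewrite inE. Qed.

Lemma val_hc m : val (hc m) = if inC m then val i else val m.
Proof.
rewrite /hc; case: ifP => // H; apply: inordK.
move: H; rewrite /inC; lia.
Qed.

Lemma inC_wd a : inC (wd a) = (a == i) || (a == j).
Proof. rewrite /inC /= -!val_eqE /=; have := ltn_ord a; lia. Qed.

Lemma hc_wd a : ~~ inC (wd a) -> hc (wd a) = a.
Proof. move=> H; apply: val_inj; rewrite val_hc (negbTE H) //. Qed.

Lemma eK X x : resp X -> (e x \in f X) = (x \in X).
Proof.
move/eqP=> R; rewrite mem_f; case: x => [[a|k]|] //=.
case H: (inC (wd a)); last by rewrite hc_wd ?H.
rewrite /hc H; move: H; rewrite inC_wd => /orP[] /eqP -> //.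
Qed.

Lemma eA X a : resp X -> (aA (wd a) \in f X) = (aA a \in X).
Proof. exact: (@eK X (aA a)). Qed.

Lemma f_inj X Y : resp X -> resp Y -> f X = f Y -> X = Y.
Proof. by move=> RX RY E; apply/setP => x; rewrite -(eK x RX) -(eK x RY) E. Qed.

Lemma f_id : f (Lid p n) = Lid q n.
Proof. by apply/setP => z; rewrite mem_f !inE; case: z => [[a|k]|]. Qed.

Lemma f_U X Y : f (X :|: Y) = f X :|: f Y.
Proof. by apply/setP => z; rewrite !inE. Qed.

Lemma f_C X : f (~: X) = ~: f X.
Proof. by apply/setP => z; rewrite !inE. Qed.

Lemma resp_U X Y : resp X -> resp Y -> resp (X :|: Y).
Proof. by move=> /eqP RX /eqP RY; rewrite /resp !inE RX RY. Qed.

Lemma resp_C X : resp X -> resp (~: X).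
Proof. by move=> /eqP RX; rewrite /resp !inE RX. Qed.

Lemma resp_comp X Y : resp X -> resp Y -> resp (Lcomp X Y).
Proof.
move=> /eqP RX /eqP RY; rewrite /resp !mem_comp_a RX RY.
have -> : Qd i X Y = Qd j X Y.
  by apply/idP/idP; [apply: Qd_swap|apply: Qd_swap; rewrite // eq_sym].
by [].
Qed.

Lemma hasA_f X : resp X -> hasA (f X) = hasA X.
Proof.
move=> RX; apply/idP/idP.
  by case/existsP=> m; rewrite mem_f /= => H; apply: hasAP H.
by case/existsP=> a H; apply: (@hasAP _ _ _ (wd a)); rewrite eA.
Qed.

Lemma hasT_f X : hasT (f X) = hasT X.
Proof. by apply/existsP/existsP => -[k H]; exists k; move: H; rewrite mem_f. Qed.

Lemma Pd_f X Y : resp X -> resp Y -> Pd (f X) (f Y) = Pd X Y.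
Proof.
move=> RX RY; have := ltn_ord i; have := ltn_ord j; have Nij : val i != val j by [].
move=> Hi Hj; apply/idP/idP.
  case/existsP=> u /existsP[v /and3P[Nuv Hu Hv]]; rewrite !mem_f /= in Hu Hv.
  have {}Nuv : val u != val v := Nuv.
  case Hcu: (inC u); case Hcv: (inC v).
  - rewrite /hc Hcu in Hu; rewrite /hc Hcv (eqP RY) in Hv.
    exact: (mkPd Nij Hu Hv).
  1-3: apply: (mkPd _ Hu Hv); rewrite !val_hc Hcu Hcv; move: Hcu Hcv; rewrite /inC; simpl in *; lia.
case/existsP=> a /existsP[b /and3P[Nab Ha Hb]].
by apply: (@mkPd _ _ _ _ (wd a) (wd b)); rewrite ?eA.
Qed.

Ltac slia := simpl in *; lia.

Lemma Qd_fwd c X Y : resp X -> resp Y -> Qd (hc c) X Y -> Qd c (f X) (f Y).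
Proof.
move=> RX RY /existsP[a /existsP[b /and5P[Nab Na Nb Ha Hb]]].
have Hi := ltn_ord i; have Hj := ltn_ord j; have Nij : val i != val j := Hij.
have Ha' := ltn_ord a; have Hb' := ltn_ord b.
have {}Nab : val a != val b := Nab.
have {}Na : val a != val (hc c) := Na.
have {}Nb : val b != val (hc c) := Nb.
rewrite !val_hc in Na Nb.
case Hc: (inC c); rewrite Hc in Na Nb; move: Hc; rewrite /inC => Hc.
- case: (val a =P val c) => Eac.
    have aj : a = j by apply: val_inj; slia.
    apply: (@mkQd _ _ _ _ _ (wd i) (wd b)); rewrite ?eA //=; try slia.
    by rewrite (eqP RX) -aj.
  case: (val b =P val c) => Ebc.
    have bj : b = j by apply: val_inj; slia.
    apply: (@mkQd _ _ _ _ _ (wd a) (wd i)); rewrite ?eA //=; try slia.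
    by rewrite (eqP RY) -bj.
  by apply: (@mkQd _ _ _ _ _ (wd a) (wd b)); rewrite ?eA //=; apply/eqP.
- by apply: (@mkQd _ _ _ _ _ (wd a) (wd b)); rewrite ?eA //=; slia.
Qed.

Lemma Qd_bwd c X Y : resp X -> resp Y -> Qd c (f X) (f Y) ->
  Qd (hc c) X Y || (aA (hc c) \in X) && (aA (hc c) \in Y).
Proof.
move=> RX RY /existsP[u /existsP[v /and5P[Nuv Nu Nv Hu Hv]]].
rewrite !mem_f /= in Hu Hv.
have Hi := ltn_ord i; have Hj := ltn_ord j; have Nij : val i != val j := Hij.
have {}Nuv : val u != val v := Nuv.
have {}Nu : val u != val c := Nu.
have {}Nv : val v != val c := Nv.
case Hcu: (inC u); case Hcv: (inC v); case Hc: (inC c).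
- by rewrite /hc Hcu in Hu; rewrite /hc Hcv in Hv; rewrite /hc Hc Hu Hv orbT.
- rewrite /hc Hcu in Hu; rewrite /hc Hcv (eqP RY) in Hv.
  apply/orP; left; apply: (mkQd _ _ _ Hu Hv); rewrite ?val_hc ?Hc; move: Hc; rewrite /inC; slia.
- rewrite /hc Hcu (eqP RX) in Hu.
  apply/orP; left; apply: (mkQd _ _ _ Hu Hv); rewrite ?val_hc ?Hc ?Hcv; move: Hc Hcv; rewrite /inC; slia.
- apply/orP; left; apply: (mkQd _ _ _ Hu Hv); rewrite ?val_hc ?Hc ?Hcv ?Hcu; move: Hc Hcv Hcu; rewrite /inC; slia.
- rewrite /hc Hcv (eqP RY) in Hv.
  apply/orP; left; apply: (mkQd _ _ _ Hu Hv); rewrite ?val_hc ?Hc ?Hcu; move: Hc Hcu; rewrite /inC; slia.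
- apply/orP; left; apply: (mkQd _ _ _ Hu Hv); rewrite ?val_hc ?Hc ?Hcv ?Hcu; move: Hc Hcv Hcu; rewrite /inC; slia.
- apply/orP; left; apply: (mkQd _ _ _ Hu Hv); rewrite ?val_hc ?Hc ?Hcv ?Hcu; move: Hc Hcv Hcu; rewrite /inC; slia.
- apply/orP; left; apply: (mkQd _ _ _ Hu Hv); rewrite ?val_hc ?Hc ?Hcv ?Hcu; move: Hc Hcv Hcu; rewrite /inC; slia.
Qed.

Lemma f_comp X Y : resp X -> resp Y -> f (Lcomp X Y) = Lcomp (f X) (f Y).
Proof.
move=> RX RY; apply/setP => z; rewrite mem_f; case: z => [[c|k]|] /=.
- rewrite !mem_comp_a !mem_f /= !hasT_f.
  apply/idP/idP => /orP[->|/orP[->|/orP[->|/orP[H|->]]]]; rewrite ?orbT //.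
    by rewrite (Qd_fwd RX RY H) !orbT.
  by case/orP: (Qd_bwd RX RY H) => [->|->]; rewrite !orbT.
- by rewrite !mem_comp_t !mem_f /= !hasA_f // !hasT_f Pd_f.
- rewrite !mem_comp_I; apply/existsP/existsP => -[x H].
    by exists (e x); rewrite !eK.
  by exists (h x); rewrite -!mem_f.
Qed.
End Spec.

Theorem lemma5 (p q n : nat) (i j : 'I_p.+1) :
  3 <= p -> p <= q -> i != j ->
  exists S : pred {set atom q n},
    @is_subalgebra q n S /\
    exists f : {set atom p n} -> {set atom q n},
      @is_iso_between p q n (@Lij p n i j) S f.
Proof.
move=> _ Hpq Hij.
pose F := @f p q n i j.
exists (fun Y => [exists X, Lij i j X && (F X == Y)]); split.
  split.
  - apply/existsP; exists (Lid p n); rewrite /F f_id eqxx andbT Lij_resp.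
    by rewrite /resp !inE.
  - move=> X' Y' /existsP[X /andP[HX /eqP <-]] /existsP[Y /andP[HY /eqP <-]].
    apply/existsP; exists (X :|: Y); rewrite /F f_U eqxx andbT Lij_resp.
    by move: HX HY; rewrite !Lij_resp; apply: resp_U.
  - move=> X' /existsP[X /andP[HX /eqP <-]].
    apply/existsP; exists (~: X); rewrite /F f_C eqxx andbT Lij_resp.
    by rewrite Lij_resp in HX; apply: resp_C.
  - move=> X' Y' /existsP[X /andP[HX /eqP <-]] /existsP[Y /andP[HY /eqP <-]].
    move: HX HY; rewrite !Lij_resp => HX HY.
    apply/existsP; exists (Lcomp X Y); rewrite /F f_comp // eqxx andbT Lij_resp.
    exact: resp_comp.
  - by [].
exists F; split; [|split; [|split; [|split; [|split; [|split; [|split]]]]]].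
- by move=> X HX; apply/existsP; exists X; rewrite HX eqxx.
- by move=> X Y; rewrite !Lij_resp; apply: f_inj.
- by move=> Y /existsP[X /andP[HX /eqP <-]]; exists X.
- exact: f_id.
- by move=> X Y _ _; apply: f_U.
- by move=> X _; apply: f_C.
- by move=> X Y; rewrite !Lij_resp; apply: f_comp.
- by [].
Qed.
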